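(* \textsc{Short Choice} is a total search problem: for every $n\ge 2$ and every instance (universe $U$ with $|U|=2^n-2$ and predicates $P_0,\dots,P_{n-2}$), a solution exists.
   Context: \textsc{Short Choice}: The universe $U$ is a set of $2^n-2$ objects, each represented by a distinct $n$-bit string. The input is a sequence of predicates $P_0,\dots,P_{n-2}$ given by poly($n$)-size circuits, with $P_i:U^{i+2}\to\{0,1\}$. A Long Choice subcertificate is a sequence of distinct elements $a_0,\dots,a_k\in U$ such that for every $i$ with $0\le i<k$ and every $j$ with $i<j\le k$, $P_i(a_0,\dots,a_i,a_j)=P_i(a_0,\dots,a_i,a_{i+1})$. An element $x\in U\setminus\{a_0,\dots,a_k\}$ extends the subcertificate if $a_0,\dots,a_k,x$ is again a Long Choice subcertificate. A solution of \textsc{Short Choice} consists of an integer $k$ with $0\le k\le n-2$, a Long Choice subcertificate $a_0,\dots,a_k$, and a bit $c\in\{0,1\}$ such that there is no $x$ extending $a_0,\dots,a_k$ with $P_k(a_0,\dots,a_k,x)=c$. *)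

(* Defs.v *)
From mathcomp Require Import all_boot.
Set Implicit Arguments. Unset Strict Implicit. Unset Printing Implicit Defensive.

Section ShortChoice.
Variable U : finType.
(* P i : U^(i+2) -> {0,1}  (only P 0 .. P (n-2) are ever used) *)
Variable P : forall i : nat, (i.+2).-tuple U -> bool.

(* (s_0, ..., s_i, x) as an (i+2)-tuple, for a sequence s with size s >= i+1 *)
Definition prefix_ext (i : nat) (s : seq U) (x : U) : (i.+2).-tuple U :=
  insubd (nseq_tuple i.+2 x) (rcons (take i.+1 s) x).

Definition subcert (k : nat) (a : (k.+1).-tuple U) : Prop :=
  uniq a /\
  forall i j : nat, i < j -> j <= k ->
    P (prefix_ext i a (nth (tnth a ord0) a j)) =
    P (prefix_ext i a (nth (tnth a ord0) a i.+1)).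

Definition extends (k : nat) (a : (k.+1).-tuple U) (x : U) : Prop :=
  x \notin a /\ subcert [tuple of rcons a x].

End ShortChoice.

(* Main.v *)
Require Import Defs.
From mathcomp Require Import all_boot zify.

Section S.
Variable U : finType.
Variable P : forall i : nat, (i.+2).-tuple U -> bool.

Definition sc (z : U) (s : seq U) : Prop :=
  uniq s /\ forall i j, i < j -> j < size s ->
    P i (prefix_ext i s (nth z s j)) = P i (prefix_ext i s (nth z s i.+1)).

Lemma nth_lt (z x : U) s n : n < size s -> nth z (rcons s x) n = nth z s n.
Proof. by rewrite nth_rcons => ->. Qed.

Lemma nth_sz (z x : U) s : nth z (rcons s x) (size s) = x.
Proof. by rewrite nth_rcons ltnn eqxx. Qed.

Lemma pre_rcons i s (y x : U) : i < size s -> prefix_ext i (rcons s y) x = prefix_ext i s x.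
Proof. by move=> h; rewrite /prefix_ext -[rcons s y]cats1 takel_cat. Qed.

Lemma subcertE k (t : (k.+1).-tuple U) z : subcert P t <-> sc z t.
Proof.
rewrite /subcert /sc size_tuple; split; move=> [u H]; split=> // i j ij jk.
- rewrite !(set_nth_default (tnth t ord0) z) ?size_tuple; try lia. apply: H; lia.
- rewrite !(set_nth_default z (tnth t ord0)) ?size_tuple; try lia. apply: H; lia.
Qed.

Lemma sc_rcons z s x : sc z (rcons s x) <->
  [/\ uniq (rcons s x), sc z s & forall i, i.+1 < size s ->
     P i (prefix_ext i s x) = P i (prefix_ext i s (nth z s i.+1))].
Proof.
split.
- move=> [u H]; split => //.
  + split; first by move: u; rewrite rcons_uniq => /andP[].
    move=> i j ij js. have := H i j ij (ltac:(rewrite size_rcons; lia)).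
    rewrite !nth_lt ?pre_rcons //; lia.
  + move=> i il. have := H i (size s) (ltac:(lia)) (ltac:(rewrite size_rcons; lia)).
    rewrite nth_sz nth_lt ?pre_rcons //; lia.
- move=> [u [_ H1] H2]; split=> // i j ij. rewrite size_rcons => js.
  rewrite !pre_rcons; try lia.
  case: (ltnP j (size s)) => jl.
  + rewrite !nth_lt //; try lia. exact: H1.
  + have -> : j = size s by lia. rewrite nth_sz.
    case: (ltnP i.+1 (size s)) => il.
    * rewrite nth_lt //. exact: H2.
    * have -> : i.+1 = size s by lia. by rewrite nth_sz.
Qed.

Definition ext z s x := x \notin s /\ sc z (rcons s x).

Lemma extendsE k (t : (k.+1).-tuple U) x z : extends P t x <-> ext z t x.
Proof.
rewrite /extends /ext. have := @subcertE _ [tuple of rcons t x] z. simpl=> ->. done.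
Qed.

Lemma ext_step z k s (y x : U) : size s = k.+1 -> ext z s y ->
  (ext z (rcons s y) x <->
   [/\ ext z s x, x != y & P k (prefix_ext k s x) = P k (prefix_ext k s y)]).
Proof.
move=> sz [ys scy]. rewrite /ext.
have [uy scs Hy] := (sc_rcons z s y).1 scy.
split.
- move=> [xn /sc_rcons [u _ H]].
  move: xn; rewrite mem_rcons in_cons negb_or => /andP[xy xs].
  split => //.
  + split => //. apply/sc_rcons; split => //.
    * by rewrite rcons_uniq xs; move: uy; rewrite rcons_uniq => /andP[].
    * move=> i il. have := H i (ltac:(rewrite size_rcons; lia)).
      by rewrite !pre_rcons ?nth_lt //; lia.
  + have hk : k.+1 < size (rcons s y) by rewrite size_rcons sz.
    have := H k hk.
    have kl : k < size s by rewrite sz.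
    rewrite !pre_rcons //.
    by rewrite -[k.+1]sz nth_sz.
- move=> [[xs /sc_rcons [ux _ Hx]] xy Heq].
  have xn : x \notin rcons s y by rewrite mem_rcons in_cons negb_or xy xs.
  split => //. apply/sc_rcons; split => //.
  + by rewrite rcons_uniq xn.
  + move=> i. rewrite size_rcons => il.
    rewrite !pre_rcons; try lia.
    case: (ltnP i.+1 (size s)) => il2.
    * rewrite nth_lt //. exact: Hx.
    * have ei : i = k by move: il il2; rewrite sz; lia. subst i. by rewrite -sz nth_sz.
Qed.

Definition GOAL (n : nat) := exists (k : nat) (a : (k.+1).-tuple U) (c : bool),
    [/\ k <= n - 2, subcert P a &
        ~ (exists x : U, extends P a x /\ P k (prefix_ext k a x) = c)].

Lemma main n d : forall k (a : (k.+1).-tuple U) (S : {set U}),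
  subcert P a -> k + d = n - 2 -> (forall x, extends P a x <-> x \in S) ->
  #|S| + 3 <= 2 ^ (d + 2) -> GOAL n.
Proof.
elim: d => [|d IH] k a S sa kd HS cS.
all: pose Q := [set x | P k (prefix_ext k a x)].
all: have cID := cardsID Q S.
all: case: (set_0Vmem (S :&: Q)) => [E0|[y0 y0in]];
  [exists k, a, true; split => //; try lia;
   move=> [x [/HS xS px]];
   have : x \in S :&: Q by rewrite inE xS inE px
  | ].
all: try by rewrite E0 inE.
all: case: (set_0Vmem (S :\: Q)) => [E1|[y1 y1in]];
  [exists k, a, false; split => //; try lia;
   move=> [x [/HS xS px]];
   have : x \in S :\: Q by rewrite inE xS inE px
  | ].
all: try by rewrite E1 inE.
- exfalso.
  have ne : y1 != y0.
    apply/eqP=> e; subst y1. move: y0in y1in; rewrite !inE => /andP[_ p0] /andP[p1 _]. by rewrite p0 in p1.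
  have sub : [set y1; y0] \subset S.
    apply/subsetP=> x; rewrite !inE => /orP[]/eqP->.
    by move: y1in; rewrite inE => /andP[].
    by move: y0in; rewrite inE => /andP[].
  have := subset_leq_card sub. rewrite cards2 ne. move: cS. rewrite expnS expnS expn0. lia.
- have gen : forall (T : {set U}) (y : U), y \in T -> 2 * #|T| <= #|S| ->
     (forall x, x \in T <-> (x \in S /\ (x \in Q = (y \in Q)))) -> GOAL n.
    move=> T y yT c2 HT.
    have [yS _] := (HT y).1 yT.
    have ey := (HS y).2 yS.
    have sa' : subcert P [tuple of rcons a y] by case: ey.
    apply: (IH k.+1 [tuple of rcons a y] (T :\ y) sa'); first by lia.
    + move=> x. rewrite (@extendsE _ [tuple of rcons a y] x y) /= (@ext_step y k a y x (size_tuple a) (proj1 (@extendsE _ a y y) ey)).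
      rewrite inE andbC. split.
      * move=> [ex xy pe]. have xS := (HS x).1 ((@extendsE _ a x y).2 ex).
        rewrite inE xy andbT. apply/HT. split => //.
        by rewrite !inE pe.
      * move/andP=> [/HT [xS qe]]; rewrite inE => xy. split => //.
        -- exact: (@extendsE _ a x y).1 ((HS x).2 xS).
        -- move: qe; rewrite !inE.
           by case: (P k _); case: (P k _).
    + have := cardsD1 y T. rewrite yT. have e2 : 2 ^ (d.+1 + 2) = 2 * 2 ^ (d + 2) by rewrite addSn expnS. move: cS. rewrite e2. lia.
  case: (leqP #|S :&: Q| #|S :\: Q|) => hc.
  + apply: (gen _ y0 y0in); first lia.
    move=> x; rewrite !inE; move: y0in; rewrite !inE => /andP[_ ->].
    split; [move/andP=> [-> ->] | move=> [-> ->]] => //.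
  + apply: (gen _ y1 y1in); first lia.
    move=> x; rewrite !inE; move: y1in; rewrite !inE => /andP[/negbTE -> _].
    split; [move/andP=> [/negbTE -> ->] | move=> [-> ->]] => //.
Qed.

End S.

Theorem theorem6 (n : nat) (U : finType)
    (P : forall i : nat, (i.+2).-tuple U -> bool) :
  2 <= n -> #|U| = 2 ^ n - 2 ->
  exists (k : nat) (a : (k.+1).-tuple U) (c : bool),
    [/\ k <= n - 2, subcert P a &
        ~ (exists x : U, extends P a x /\ P k (prefix_ext k a x) = c)].
Proof.
move=> n2 cU.
have p4 : 2 ^ 2 <= 2 ^ n by rewrite leq_pexp2l.
case: (pickP (@predT U)) => [a0 _|e]; last first.
  have := eq_card0 e. rewrite cU. move: p4. simpl. lia.
apply: (@main U P n (n - 2) 0 [tuple a0] [set~ a0]).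
- rewrite (@subcertE _ P _ [tuple a0] a0). split => //. move=> i j ij /=. lia.
- lia.
- move=> x. rewrite (@extendsE _ P _ [tuple a0] x a0) !inE /ext /=. split.
  + by rewrite inE => -[].
  + move=> h. split; first by rewrite inE.
    apply: (proj2 (@sc_rcons U P a0 [:: a0] x)). split.
    * by rewrite /= inE eq_sym h.
    * split => //= i j; lia.
    * move=> i /=; lia.
- rewrite cardsC1 cU subnK //. lia.
Qed.
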